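(* Let $\mathcal{H},\mathcal{K}$ be complex Hilbert spaces of dimension greater than $2$, and let $(f_*,f^* ):(\mathsf{P}(\mathcal{H}),\mathsf{L}(\mathcal{H}),\bar e_{\mathcal{H}})\to(\mathsf{P}(\mathcal{K}),\mathsf{L}(\mathcal{K}),\bar e_{\mathcal{K}})$ be a Chu morphism with $f_*$ injective. Then there is a semiunitary $U:\mathcal{H}\to\mathcal{K}$ such that $f_*=\mathsf{P}(U)$, i.e. $f_*([\psi])=[U\psi]$ for all nonzero $\psi\in\mathcal{H}$. Moreover $U$ is unique up to multiplication by a scalar of modulus $1$.
   Context: A Chu space over $[0,1]$ is a triple $(X,A,e)$ with $e:X\times A\to[0,1]$; a Chu morphism $(X,A,e)\to(X',A',e')$ is a pair $(f_*:X\to X',\,f^*:A'\to A)$ with $e(x,f^*(a'))=e'(f_*(x),a')$ for all $x,a'$. For a complex Hilbert space $\mathcal{H}$: $\mathsf{L}(\mathcal{H})$ is the set of closed subspaces, $P_S$ the orthogonal projector onto $S$, $\mathsf{P}(\mathcal{H})$ the set of rays $[\psi]=\{\lambda\psi:\lambda\in\mathbb{C}\}$ with $\psi\ne0$, and $\bar e_{\mathcal{H}}([\psi],S)=\|P_S\psi\|^2/\|\psi\|^2$. A map $U:\mathcal{H}\to\mathcal{K}$ is semiunitary if it is a bijection with $U(\phi+\psi)=U\phi+U\psi$, $U(\lambda\phi)=\sigma(\lambda)U\phi$, $\langle U\phi,U\psi\rangle=\sigma(\langle\phi,\psi\rangle)$, where $\sigma$ is the identity or complex conjugation. *)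

(* Defs.v *)
From HB Require Import structures.
From mathcomp Require Import all_boot all_order all_algebra.
From mathcomp Require Import boolp classical_sets reals.
From mathcomp Require Import complex.
Set Implicit Arguments. Unset Strict Implicit. Unset Printing Implicit Defensive.
Import Order.TTheory GRing.Theory Num.Theory.
Local Open Scope ring_scope.
Local Open Scope classical_set_scope.

Section Hilbert.
Variable R : realType.
Notation C := (R[i]).
Variable H : lmodType C.
Variable ip : H -> H -> C.

Definition hnorm (x : H) : R := Num.sqrt (complex.Re (ip x x)).

Definition cauchy_seq (u : nat -> H) : Prop :=
  forall eps : R, 0 < eps -> exists N : nat,
    forall m n : nat, (N <= m)%N -> (N <= n)%N -> hnorm (u m - u n) < eps.

Definition converges_to (u : nat -> H) (l : H) : Prop :=
  forall eps : R, 0 < eps -> exists N : nat,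
    forall n : nat, (N <= n)%N -> hnorm (u n - l) < eps.

Record is_hilbert : Prop := IsHilbert {
  ip_linear : forall (a : C) (x y z : H), ip x (a *: y + z) = a * ip x y + ip x z;
  ip_conj : forall x y : H, ip y x = (ip x y)^*;
  ip_pos : forall x : H, 0 <= ip x x;
  ip_definite : forall x : H, ip x x = 0 -> x = 0;
  ip_complete : forall u : nat -> H, cauchy_seq u -> exists l, converges_to u l
}.

Definition dim_gt2 : Prop :=
  exists x1 x2 x3 : H, forall a1 a2 a3 : C,
    a1 *: x1 + a2 *: x2 + a3 *: x3 = 0 -> [/\ a1 = 0, a2 = 0 & a3 = 0].

Definition closed_subspace (S : set H) : Prop :=
  [/\ S 0,
      (forall (a : C) x y, S x -> S y -> S (a *: x + y)) &
      (forall (u : nat -> H) l, (forall n, S (u n)) -> converges_to u l -> S l)].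

Definition LH := {S : set H | closed_subspace S}.

Definition span1 (psi : H) : set H := [set lambda *: psi | lambda in [set: C]].

Definition is_ray (r : set H) : Prop := exists psi : H, psi <> 0 /\ r = span1 psi.

Definition PH := {r : set H | is_ray r}.

(* orthogonal projector P_S psi : the unique p in S with psi - p orthogonal to S
   (it exists and is unique since S is closed and H complete). *)
Definition is_proj (S : set H) (psi p : H) : Prop :=
  S p /\ forall s, S s -> ip s (psi - p) = 0.

Definition proj (S : set H) (psi : H) : H := xget 0 (is_proj S psi).

Definition ray_rep (r : set H) : H := xget 0 (fun psi => r psi /\ psi <> 0).

(* ebar([psi], S) = ||P_S psi||^2 / ||psi||^2  (independent of the representative) *)
Definition ebar (r : PH) (S : LH) : R :=
  let psi := ray_rep (proj1_sig r) in
  hnorm (proj (proj1_sig S) psi) ^+ 2 / hnorm psi ^+ 2.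

End Hilbert.

Definition chu_morphism (R : Type) (X A X' A' : Type)
  (e : X -> A -> R) (e' : X' -> A' -> R) (f_ : X -> X') (f' : A' -> A) : Prop :=
  forall (x : X) (a' : A'), e x (f' a') = e' (f_ x) a'.

Definition semiunitary_with (R : realType) (H K : lmodType R[i])
  (ipH : H -> H -> R[i]) (ipK : K -> K -> R[i])
  (sigma : R[i] -> R[i]) (U : H -> K) : Prop :=
  [/\ bijective U,
      (forall phi psi, U (phi + psi) = U phi + U psi),
      (forall (lambda : R[i]) phi, U (lambda *: phi) = sigma lambda *: U phi) &
      (forall phi psi, ipK (U phi) (U psi) = sigma (ipH phi psi))].

Definition semiunitary (R : realType) (H K : lmodType R[i])
  (ipH : H -> H -> R[i]) (ipK : K -> K -> R[i]) (U : H -> K) : Prop :=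
  semiunitary_with ipH ipK id U \/ semiunitary_with ipH ipK (fun z => z^*) U.

Definition induces (R : realType) (H K : lmodType R[i])
  (ipH : H -> H -> R[i]) (ipK : K -> K -> R[i])
  (fs : PH H -> PH K) (U : H -> K) : Prop :=
  forall (x : PH H) (psi : H), psi <> 0 -> proj1_sig x = span1 psi -> proj1_sig (fs x) = span1 (U psi).

(* Main.v *)
Require Import Defs.
From HB Require Import structures.
From mathcomp Require Import all_boot all_order all_algebra.
From mathcomp Require Import boolp classical_sets reals complex.
From mathcomp.algebra_tactics Require Import ring lra.
Set Implicit Arguments. Unset Strict Implicit. Unset Printing Implicit Defensive.
Import Order.TTheory GRing.Theory Num.Theory.
Local Open Scope ring_scope.
Local Notation "x %:C" := (real_complex _ x) : ring_scope.

Section CJ.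
Variable R : realType.
Implicit Types a b : R[i].
Lemma cjD a b : (a + b)^* = a^* + b^*. Proof. exact: rmorphD. Qed.
Lemma cjB a b : (a - b)^* = a^* - b^*. Proof. exact: rmorphB. Qed.
Lemma cjN a : (- a)^* = - a^*. Proof. exact: rmorphN. Qed.
Lemma cjM a b : (a * b)^* = a^* * b^*. Proof. exact: rmorphM. Qed.
Lemma cjV a : (a^-1)^* = (a^*)^-1. Proof. exact: fmorphV. Qed.
Lemma cjK a : a^*^* = a. Proof. exact: conjCK. Qed.
Lemma cj0 : (0 : R[i])^* = 0. Proof. exact: conjC0. Qed.
Lemma cj1 : (1 : R[i])^* = 1. Proof. exact: conjC1. Qed.
End CJ.
Arguments cj0 {R}.
Arguments cj1 {R}.

Section IP.
Variables (R : realType) (H : lmodType R[i]) (ip : H -> H -> R[i]).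
Hypothesis hH : is_hilbert ip.

Lemma ipD_r x y z : ip x (y + z) = ip x y + ip x z.
Proof. by have := ip_linear hH 1 x y z; rewrite scale1r mul1r. Qed.

Lemma ip0_r x : ip x 0 = 0.
Proof. by apply: (addrI (ip x 0)); rewrite -ipD_r !addr0. Qed.

Lemma ipZ_r x a y : ip x (a *: y) = a * ip x y.
Proof. by have := ip_linear hH a x y 0; rewrite !addr0 ip0_r addr0. Qed.

Lemma ipC x y : ip x y = (ip y x)^*.
Proof. exact: ip_conj. Qed.

Lemma ipD_l x y z : ip (x + y) z = ip x z + ip y z.
Proof. by rewrite ipC ipD_r cjD -!ipC. Qed.

Lemma ipZ_l a x y : ip (a *: x) y = a^* * ip x y.
Proof. by rewrite ipC ipZ_r cjM -!ipC. Qed.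

Lemma ip0_l x : ip 0 x = 0.
Proof. by rewrite ipC ip0_r conjC0. Qed.

Lemma ipN_r x y : ip x (- y) = - ip x y.
Proof. by rewrite -scaleN1r ipZ_r mulN1r. Qed.
Lemma ipN_l x y : ip (- x) y = - ip x y.
Proof. by rewrite -scaleN1r ipZ_l conjCN1 mulN1r. Qed.
Lemma ipB_r x y z : ip x (y - z) = ip x y - ip x z.
Proof. by rewrite ipD_r ipN_r. Qed.
Lemma ipB_l x y z : ip (x - y) z = ip x z - ip y z.
Proof. by rewrite ipD_l ipN_l. Qed.

Definition ipE := (ipD_r, ipD_l, ipZ_r, ipZ_l, ipN_r, ipN_l, ip0_r, ip0_l).

Lemma ipxx_conj x : (ip x x)^* = ip x x.
Proof. by rewrite -ipC. Qed.

Lemma ipxx_ge0 x : 0 <= ip x x.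
Proof. exact: ip_pos. Qed.

Lemma ipxx_eq0 x : (ip x x == 0) = (x == 0).
Proof.
apply/eqP/eqP => [/(ip_definite hH)//|->]; exact: ip0_r.
Qed.

Lemma ipxx_neq0 x : x != 0 -> ip x x != 0.
Proof. by rewrite ipxx_eq0. Qed.

Definition pc (u v : H) := ip u v / ip u u.

Lemma proj_pyth u v : let w := v - pc u v *: u in
  ip u w = 0 /\ ip w w = ip v v - ip u v * ip v u / ip u u.
Proof.
move=> w; rewrite /w /pc.
have [->|u0] := eqVneq u 0.
  by rewrite !scaler0 subr0 !ip0_l !mul0r subr0.
have uu0 := ipxx_neq0 u0.
split.
  by rewrite ipB_r ipZ_r mulfVK // subrr.
rewrite !ipE cjM cjV ipxx_conj -ipC.
field; exact: uu0.
Qed.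

Lemma cs_eq u v : u != 0 -> ip u v * ip v u = ip u u * ip v v ->
  v = pc u v *: u.
Proof.
move=> u0 e; have [_] := proj_pyth u v.
have uu0 := ipxx_neq0 u0.
have -> : ip u v * ip v u / ip u u = ip v v by rewrite e; field.
rewrite subrr => /eqP.
by rewrite ipxx_eq0 subr_eq0 => /eqP.
Qed.

Lemma bessel2 e h v : ip e e = 1 -> ip e h = 0 -> h != 0 ->
  ip v v = ip e v * ip v e + ip h v * ip v h / ip h h ->
  v = ip e v *: e + (ip h v / ip h h) *: h.
Proof.
move=> ee eh h0 hv.
have [_ w1] := proj_pyth e v.
set v1 := v - pc e v *: e in w1.
have hv1 : ip h v1 = ip h v by rewrite /v1 ipB_r ipZ_r (ipC h e) eh conjC0 mulr0 subr0.
have hv1' : ip v1 h = ip v h by rewrite ipC hv1 -ipC.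
have [_ w2] := proj_pyth h v1.
rewrite hv1 hv1' w1 hv ee divr1 in w2.
have : ip (v1 - pc h v1 *: h) (v1 - pc h v1 *: h) == 0 by rewrite w2; apply/eqP; ring.
rewrite ipxx_eq0 subr_eq0 => /eqP.
rewrite /v1 /pc hv1 ee divr1 => /eqP; rewrite subr_eq => /eqP vE.
by rewrite {1}vE addrC.
Qed.


Lemma ipxx_Re x : (complex.Re (ip x x))%:C = ip x x.
Proof. by apply: RRe_real; apply: ger0_real; exact: ipxx_ge0. Qed.

Lemma Re_ipxx_ge0 x : 0 <= complex.Re (ip x x).
Proof. by rewrite -ler0c ipxx_Re ipxx_ge0. Qed.

Lemma hnorm_sq x : (hnorm ip x ^+ 2)%:C = ip x x.
Proof. by rewrite /hnorm sqr_sqrtr ?Re_ipxx_ge0 // ipxx_Re. Qed.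

Lemma span1P (phi x : H) : span1 phi x <-> exists l, x = l *: phi.
Proof.
split; first by case=> l _ <-; exists l.
by case=> l ->; exists l.
Qed.

Lemma ipxx_le_proj (phi d : H) : ip (d - pc phi d *: phi) (d - pc phi d *: phi) <= ip d d.
Proof.
have [_ ->] := proj_pyth phi d.
rewrite lerBlDr lerDl; apply: divr_ge0; last exact: ipxx_ge0.
by rewrite (ipC d phi); apply: mul_conjC_ge0.
Qed.

Lemma pc_scale (phi : H) l : pc phi (l *: phi) *: phi = l *: phi.
Proof.
rewrite /pc ipZ_r; have [->|p0] := eqVneq phi 0; first by rewrite !scaler0.
by rewrite mulfK // ipxx_neq0.
Qed.

Lemma span1_closed (phi : H) : closed_subspace ip (span1 phi).
Proof.
split.
- by apply/span1P; exists 0; rewrite scale0r.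
- move=> a x y /span1P[l ->] /span1P[m ->]; apply/span1P.
  by exists (a * l + m); rewrite scalerDl scalerA.
move=> u l hu hc; apply/span1P; exists (pc phi l).
set w := l - pc phi l *: phi.
suff : w = 0 by move/eqP; rewrite subr_eq0 => /eqP.
apply/eqP; rewrite -ipxx_eq0.
have key n : ip w w <= ip (u n - l) (u n - l).
  have [m hm] := (span1P _ _).1 (hu n).
  have -> : w = - ((u n - l) - pc phi (u n - l) *: phi).
    rewrite /w /pc ipB_r mulrBl scalerBl -/(pc phi (u n)) -/(pc phi l) {2}hm pc_scale -hm.
    rewrite opprB opprB addrC addrA.
    set z := u n; set y := pc phi l *: phi.
    by rewrite [z - y + l - z]addrAC [z - y - z]addrAC subrr add0r.
  rewrite ipN_l ipN_r opprK; exact: ipxx_le_proj.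
set r := complex.Re (ip w w).
have hr eps : 0 < eps -> r < eps ^+ 2.
  move=> he; have [N hN] := hc eps he; have h1 := hN N (leqnn N).
  have := key N; rewrite lecE => /andP[_ h2].
  have h3 : complex.Re (ip (u N - l) (u N - l)) = hnorm ip (u N - l) ^+ 2.
    by rewrite -hnorm_sq.
  have h4 : 0 <= hnorm ip (u N - l) by apply: sqrtr_ge0.
  rewrite h3 in h2; nra.
have r0 : r = 0.
  apply/eqP; rewrite eq_le Re_ipxx_ge0 andbT; apply/negP => /negP; rewrite -ltNge => rp.
  have := hr (Num.sqrt r); rewrite sqrtr_gt0 rp sqr_sqrtr ?ltxx; [by move/(_ isT) | exact: ltW].
by rewrite -ipxx_Re -/r r0.
Qed.

Lemma is_proj_span1 (phi psi : H) : is_proj ip (span1 phi) psi (pc phi psi *: phi).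
Proof.
split; first by apply/span1P; exists (pc phi psi).
move=> s /span1P[m ->]; rewrite ipZ_l.
by have [-> _] := proj_pyth phi psi; rewrite mulr0.
Qed.

Lemma proj_span1 (phi psi : H) : proj ip (span1 phi) psi = pc phi psi *: phi.
Proof.
apply: xget_unique; first exact: is_proj_span1.
move=> y [/span1P[m ->] hy].
have [->|p0] := eqVneq phi 0; first by rewrite !scaler0.
have := hy phi ((span1P _ _).2 (ex_intro _ 1 (esym (scale1r phi)))).
rewrite ipB_r ipZ_r => /eqP; rewrite subr_eq0 => /eqP e.
by rewrite /pc e mulfK // ipxx_neq0.
Qed.

Lemma sub_in (S : set H) x y : closed_subspace ip S -> S x -> S y -> S (x - y).
Proof.
case=> S0 Sc _ Sx Sy; have := Sc (-1) y x Sy Sx.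
by rewrite scaleN1r addrC.
Qed.

Lemma scale_in (S : set H) a x : closed_subspace ip S -> S x -> S (a *: x).
Proof. by case=> S0 Sc _ Sx; have := Sc a x 0 Sx S0; rewrite addr0. Qed.

Lemma proj_in (S : set H) psi : closed_subspace ip S -> S psi -> proj ip S psi = psi.
Proof.
move=> cS Spsi; apply: xget_unique.
  by split=> // s _; rewrite subrr ip0_r.
move=> y [Sy hy]; have := hy _ (sub_in cS Spsi Sy).
by move/eqP; rewrite ipxx_eq0 subr_eq0 => /eqP.
Qed.

Lemma proj_cases (S : set H) psi : is_proj ip S psi (proj ip S psi) \/ proj ip S psi = 0.
Proof. by rewrite /proj; case: xgetP => [x _ h|_]; [left|right]. Qed.

Lemma is_proj_pyth (S : set H) psi p : is_proj ip S psi p ->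
  ip psi psi = ip p p + ip (psi - p) (psi - p).
Proof.
case=> Sp hp; have h1 := hp p Sp; have h2 : ip (psi - p) p = 0 by rewrite ipC h1 cj0.
move: h1 h2; set d := psi - p => h1 h2.
have e : psi = d + p by rewrite /d subrK.
clearbody d; rewrite e ipD_l !ipD_r h1 h2; ring.
Qed.

Lemma span1_id (phi : H) : span1 phi phi.
Proof. by apply/span1P; exists 1; rewrite scale1r. Qed.

Lemma span1_scale (phi : H) c : c != 0 -> span1 (c *: phi) = span1 phi.
Proof.
move=> c0; apply/seteqP; split=> x /span1P[m ->]; apply/span1P.
  by exists (m * c); rewrite scalerA.
by exists (m / c); rewrite scalerA mulfVK.
Qed.

Lemma span1_0 : span1 (0 : H) = [set (0 : H)]%classic.
Proof.
apply/seteqP; split=> x; first by case/span1P=> m ->; rewrite scaler0.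
by move=> ->; apply: span1_id.
Qed.

Lemma span1_eq (phi psi : H) : phi != 0 -> span1 phi = span1 psi ->
  exists c, c != 0 /\ psi = c *: phi.
Proof.
move=> p0 e; have := span1_id psi; rewrite -e => /span1P[c hc].
exists c; split=> //; apply/negP => /eqP c0; move: hc; rewrite c0 scale0r => ps0.
move: e; rewrite ps0 span1_0 => e; have := span1_id phi; rewrite e => /= pe.
by rewrite pe eqxx in p0.
Qed.

Lemma ray_rep_span (phi : H) : phi != 0 ->
  exists c, c != 0 /\ ray_rep (span1 phi) = c *: phi.
Proof.
move=> p0; have : span1 phi (ray_rep (span1 phi)) /\ ray_rep (span1 phi) <> 0.
  apply: (@xgetPex _ 0 (fun psi : H => span1 phi psi /\ psi <> 0)).
  by exists phi; split; [exact: span1_id | exact/eqP].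
case=> /span1P[c hc] r0; exists c; split=> //.
by apply/negP => /eqP c0; apply: r0; rewrite hc c0 scale0r.
Qed.

Definition mkray (phi : H) (h : phi != 0) : PH H :=
  exist _ (span1 phi) (ex_intro _ phi (conj (elimN eqP h) erefl)).

Definition mkL (phi : H) : LH ip := exist _ (span1 phi) (span1_closed phi).

Lemma rcdiv (a b : R) : (a / b)%:C = a%:C / b%:C.
Proof. exact: fmorph_div. Qed.

Lemma ebarE (r : PH H) (S : LH ip) :
  (@ebar R H ip r S)%:C =
  ip (proj ip (proj1_sig S) (ray_rep (proj1_sig r))) (proj ip (proj1_sig S) (ray_rep (proj1_sig r)))
  / ip (ray_rep (proj1_sig r)) (ray_rep (proj1_sig r)).
Proof. by rewrite /ebar rcdiv !hnorm_sq. Qed.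

Definition tp (u v : H) := ip u v * ip v u / (ip u u * ip v v).

Lemma ebar_span1 (r : PH H) (S : LH ip) (phi psi : H) :
  proj1_sig r = span1 psi -> psi != 0 -> proj1_sig S = span1 phi ->
  (@ebar R H ip r S)%:C = tp phi psi.
Proof.
move=> hr p0 hS; rewrite ebarE hr hS proj_span1.
have [c [c0 ->]] := ray_rep_span p0.
rewrite /tp /pc !ipE !cjM cjV ipxx_conj -!ipC.
have [->|f0] := eqVneq phi 0; first by rewrite !ip0_l !ip0_r !(mul0r, mulr0, invr0).
have ff := ipxx_neq0 f0; have pp := ipxx_neq0 p0.
have cc : c^* != 0 by rewrite conjC_eq0.
by field; rewrite ff pp c0 cc.
Qed.

End IP.



Section SG.
Variable R : realType.
Definition sg (b : bool) (z : R[i]) := if b then z else z^*.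
Lemma sgD b x y : sg b (x + y) = sg b x + sg b y.
Proof. by case: b => //=; rewrite cjD. Qed.
Lemma sgM b x y : sg b (x * y) = sg b x * sg b y.
Proof. by case: b => //=; rewrite cjM. Qed.
Lemma sgN b x : sg b (- x) = - sg b x.
Proof. by case: b => //=; rewrite cjN. Qed.
Lemma sgJ b x : sg b (x^*) = (sg b x)^*.
Proof. by case: b. Qed.
Lemma sgK b x : sg b (sg b x) = x.
Proof. by case: b => //=; rewrite cjK. Qed.
Lemma sg_real b x : x^* = x -> sg b x = x.
Proof. by case: b. Qed.
Lemma sg0 b : sg b 0 = 0. Proof. by case: b => //=; rewrite cj0. Qed.
Lemma sg_eq0 b x : (sg b x == 0) = (x == 0).
Proof. by case: b => //=; rewrite conjC_eq0. Qed.
End SG.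

Section Core.
Variables (R : realType) (H K : lmodType R[i]) (ipH : H -> H -> R[i]) (ipK : K -> K -> R[i]).
Hypotheses (hH : is_hilbert ipH) (hK : is_hilbert ipK).
Variable g : H -> K.
Hypothesis G0 : forall x, ipK (g x) (g x) = ipH x x.
Hypothesis G1 : forall x y, ipK (g x) (g y) * ipK (g y) (g x) = ipH x y * ipH y x.
Variable e : H.
Hypothesis ee : ipH e e = 1.

Local Notation e' := (g e).
Lemma ee' : ipK e' e' = 1. Proof. by rewrite G0. Qed.

Lemma g0 : g 0 = 0.
Proof. by apply/eqP; rewrite -(ipxx_eq0 hK) G0 (ip0_r hH). Qed.

Definition al y := ipK e' (g (e + y)).
Fact Phi_key : unit. Proof. exact: tt. Qed.
Definition Phi := locked_with Phi_key (fun y => (al y)^-1 *: g (e + y) - e').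
Lemma PhiE y : Phi y = (al y)^-1 *: g (e + y) - e'.
Proof. by rewrite /Phi unlock. Qed.

Lemma ipHe_y y : ipH e y = 0 -> ipH y e = 0.
Proof. by move=> h; rewrite (ipC hH) h cj0. Qed.

Lemma ipH_ey y : ipH e y = 0 -> ipH e (e + y) = 1.
Proof. by move=> h; rewrite (ipD_r hH) h ee addr0. Qed.

Lemma al_norm y : ipH e y = 0 -> al y * (al y)^* = 1.
Proof.
move=> h; rewrite /al -(ipC hK) G1 (ipH_ey h) (ipC hH (e + y)) (ipH_ey h) cj1.
by rewrite mulr1.
Qed.

Lemma al_neq0 y : ipH e y = 0 -> al y != 0.
Proof. by move=> /al_norm h; apply/eqP => a0; move: h; rewrite a0 mul0r => /eqP; rewrite eq_sym oner_eq0. Qed.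

Lemma al_inv y : ipH e y = 0 -> (al y)^-1 = (al y)^*.
Proof.
move=> h; have a0 := al_neq0 h.
by apply: (mulfI a0); rewrite mulfV // (al_norm h).
Qed.


Lemma alJ y : ipH e y = 0 -> (al y)^* = (al y)^-1.
Proof. by move=> h; rewrite al_inv. Qed.

Lemma wal y : ipK (g (e + y)) e' = (al y)^*.
Proof. by rewrite /al -(ipC hK). Qed.

Lemma nEy y : ipH e y = 0 -> ipH (e + y) (e + y) = 1 + ipH y y.
Proof.
move=> h; rewrite !(ipD_l hH) !(ipD_r hH) ee h (ipHe_y h); ring.
Qed.

Lemma Phi_e' y : ipH e y = 0 -> ipK e' (Phi y) = 0.
Proof.
move=> h; rewrite PhiE (ipB_r hK) (ipZ_r hK) -/(al y) mulVf ?al_neq0 // ee' subrr //.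
Qed.

Lemma Phi_e'2 y : ipH e y = 0 -> ipK (Phi y) e' = 0.
Proof. by move=> h; rewrite (ipC hK) Phi_e' // cj0. Qed.

Lemma Phi_norm y : ipH e y = 0 -> ipK (Phi y) (Phi y) = ipH y y.
Proof.
move=> h; rewrite PhiE !(ipB_l hK) !(ipB_r hK) !(ipZ_l hK) !(ipZ_r hK).
rewrite G0 (nEy h) ee' wal -/(al y) cjV (alJ h) invrK.
have a0 := al_neq0 h.
by field.
Qed.

Lemma Phi0 : Phi 0 = 0.
Proof.
rewrite PhiE addr0 /al addr0 ee' invr1 scale1r subrr //.
Qed.

Lemma gnorm0 x : (g x == 0) = (x == 0).
Proof. by rewrite -(ipxx_eq0 hK) G0 (ipxx_eq0 hH). Qed.

Lemma Phi_eq0 y : ipH e y = 0 -> (Phi y == 0) = (y == 0).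
Proof. by move=> h; rewrite -(ipxx_eq0 hK) Phi_norm // (ipxx_eq0 hH). Qed.

Lemma Phi_g y : ipH e y = 0 -> exists c, Phi y = c *: g y.
Proof.
move=> h; have [->|y0] := eqVneq y 0; first by exists 0; rewrite Phi0 scale0r.
set hy := g y.
have eh : ipK e' hy = 0.
  have := G1 e y; rewrite h mul0r -/hy (ipC hK hy) => /eqP.
  by rewrite mul_conjC_eq0 => /eqP.
have h0 : hy != 0 by rewrite gnorm0.
set w := g (e + y).
have B : w = ipK e' w *: e' + (ipK hy w / ipK hy hy) *: hy.
  apply: (bessel2 hK) => //; first exact: ee'.
  rewrite G1 G0 G0 (nEy h) (ipH_ey h) (ipC hH (e + y) e) (ipH_ey h) cj1 mul1r /hy /w G1.
  rewrite (ipD_r hH) (ipD_l hH) (ipHe_y h) add0r h add0r.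
  have yy := ipxx_neq0 hH y0.
  by field.
exists ((al y)^-1 * (ipK hy w / ipK hy hy)).
rewrite PhiE -/w {1}B -/(al y) scalerDr scalerA mulVf ?al_neq0 // scale1r.
by rewrite addrC addKr scalerA.
Qed.


Lemma Phi_normc y c : ipH e y = 0 -> y != 0 -> Phi y = c *: g y -> c^* * c = 1.
Proof.
move=> h y0 hc; have := Phi_norm h; rewrite hc (ipZ_l hK) (ipZ_r hK) G0 mulrA.
by move=> /eqP; rewrite -{2}(mul1r (ipH y y)) (inj_eq (mulIf (ipxx_neq0 hH y0))) => /eqP.
Qed.

Lemma Phi_prod y z : ipH e y = 0 -> ipH e z = 0 ->
  ipK (Phi y) (Phi z) * ipK (Phi z) (Phi y) = ipH y z * ipH z y.
Proof.
move=> hy hz.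
have [->|y0] := eqVneq y 0; first by rewrite Phi0 !(ip0_l hK) !(ip0_r hK) !(ip0_l hH) !(ip0_r hH) !mul0r.
have [->|z0] := eqVneq z 0; first by rewrite Phi0 !(ip0_l hK) !(ip0_r hK) !(ip0_l hH) !(ip0_r hH) !mul0r.
have [cy ey] := Phi_g hy; have [cz ez] := Phi_g hz.
have ny := Phi_normc hy y0 ey; have nz := Phi_normc hz z0 ez.
rewrite ey ez !(ipZ_l hK) !(ipZ_r hK).
have -> : forall A B : R[i], cy^* * (cz * A) * (cz^* * (cy * B)) = (cy^* * cy) * (cz^* * cz) * (A * B) by move=> A B; ring.
by rewrite ny nz !mul1r G1.
Qed.

Lemma ey_inv y : ipH e y = 0 -> e' + Phi y = (al y)^-1 *: g (e + y).
Proof. by move=> h; rewrite PhiE addrC subrK. Qed.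

Lemma Phi_RE y z : ipH e y = 0 -> ipH e z = 0 ->
  ipK (Phi y) (Phi z) + ipK (Phi z) (Phi y) = ipH y z + ipH z y.
Proof.
move=> hy hz.
have h1 u v : ipH e u = 0 -> ipH e v = 0 -> ipK (e' + Phi u) (e' + Phi v) = 1 + ipK (Phi u) (Phi v).
  move=> hu hv; rewrite !(ipD_l hK) !(ipD_r hK) ee' Phi_e' // Phi_e'2 //; ring.
have h3 : (1 + ipK (Phi y) (Phi z)) * (1 + ipK (Phi z) (Phi y)) =
          (1 + ipH y z) * (1 + ipH z y).
  rewrite -h1 // -h1 // !ey_inv // !(ipZ_l hK) !(ipZ_r hK).
  have -> : forall A B : R[i], ((al y)^-1)^* * ((al z)^-1 * A) * (((al z)^-1)^* * ((al y)^-1 * B))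
     = (((al y)^-1)^* * (al y)^-1) * (((al z)^-1)^* * (al z)^-1) * (A * B) by move=> A B; ring.
  have N u : ipH e u = 0 -> ((al u)^-1)^* * (al u)^-1 = 1.
    by move=> hu; rewrite cjV (alJ hu) invrK mulfV // al_neq0.
  rewrite N // N // !mul1r G1 !(ipD_l hH) !(ipD_r hH) ee hy hz (ipHe_y hy) (ipHe_y hz); ring.
have -> : forall P Q : R[i], P + Q = (1 + P) * (1 + Q) - 1 - P * Q by move=> P Q; ring.
by rewrite h3 Phi_prod //; ring.
Qed.

Lemma Phi_swap x y : ipH e x = 0 -> ipH e y = 0 ->
  ipK (Phi y) (Phi x) = ipH x y + ipH y x - ipK (Phi x) (Phi y).
Proof. by move=> hx hy; rewrite -Phi_RE // addrC addKr. Qed.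

Lemma E_add y z : ipH e y = 0 -> ipH e z = 0 -> ipH e (y + z) = 0.
Proof. by move=> hy hz; rewrite (ipD_r hH) hy hz addr0. Qed.
Lemma E_scale c y : ipH e y = 0 -> ipH e (c *: y) = 0.
Proof. by move=> hy; rewrite (ipZ_r hH) hy mulr0. Qed.

Lemma Phi_lin a b c r s : ipH e a = 0 -> ipH e b = 0 -> ipH e c = 0 -> r^* = r -> s^* = s ->
  ipK (Phi a - r *: Phi b - s *: Phi c) (Phi a - r *: Phi b - s *: Phi c)
  = ipH (a - r *: b - s *: c) (a - r *: b - s *: c).
Proof.
move=> ha hb hc hr hs.
rewrite !(ipB_l hK) !(ipB_r hK) !(ipZ_l hK) !(ipZ_r hK).
rewrite !(ipB_l hH) !(ipB_r hH) !(ipZ_l hH) !(ipZ_r hH) hr hs.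
rewrite (Phi_swap ha hb) (Phi_swap ha hc) (Phi_swap hb hc) !Phi_norm //.
ring.
Qed.


Lemma Phi_add y z : ipH e y = 0 -> ipH e z = 0 -> Phi (y + z) = Phi y + Phi z.
Proof.
move=> hy hz; have := Phi_lin (E_add hy hz) hy hz cj1 cj1.
rewrite !scale1r; have -> : y + z - y - z = 0 :> H by rewrite (addrC y) addrK subrr.
rewrite (ip0_r hH) => /eqP; rewrite (ipxx_eq0 hK).
by rewrite subr_eq0 subr_eq => /eqP ->; rewrite addrC.
Qed.

Lemma Phi_rscale y r : ipH e y = 0 -> r^* = r -> Phi (r *: y) = r *: Phi y.
Proof.
move=> hy hr; have := Phi_lin (E_scale r hy) hy hy hr cj0.
rewrite !scale0r !subr0 subrr (ip0_r hH) => /eqP; rewrite (ipxx_eq0 hK).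
by rewrite subr_eq0 => /eqP.
Qed.

Lemma Phi_opp y : ipH e y = 0 -> Phi (- y) = - Phi y.
Proof. by move=> hy; rewrite -scaleN1r Phi_rscale ?scaleN1r // cjN cj1. Qed.

Lemma Phi_i y : ipH e y = 0 -> y != 0 ->
  Phi ('i *: y) = 'i *: Phi y \/ Phi ('i *: y) = - 'i *: Phi y.
Proof.
move=> hy y0; have hiy := E_scale 'i hy.
have u0 : Phi y != 0 by rewrite Phi_eq0.
have nyy := ipxx_neq0 hH y0.
have hn : ipK (Phi ('i *: y)) (Phi ('i *: y)) = ipH y y.
  by rewrite Phi_norm // (ipZ_l hH) (ipZ_r hH) conjCi mulrA mulNr -expr2 sqrCi opprK mul1r.
have L : Phi ('i *: y) = pc ipK (Phi y) (Phi ('i *: y)) *: Phi y.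
  apply: (cs_eq hK) => //.
  rewrite Phi_prod // hn Phi_norm // (ipZ_l hH) (ipZ_r hH) conjCi.
  have -> : forall A : R[i], 'i * A * (- 'i * A) = - ('i ^+ 2) * A * A by move=> A; ring.
  by rewrite sqrCi opprK mul1r.
set l := pc ipK (Phi y) (Phi ('i *: y)) in L.
have S := Phi_RE hy hiy.
rewrite L (ipZ_l hK) (ipZ_r hK) Phi_norm // (ipZ_l hH) (ipZ_r hH) conjCi in S.
have S' : (l + l^*) * ipH y y = 0 by rewrite mulrDl S; ring.
move/eqP: S'; rewrite mulf_eq0 (negPf nyy) orbF => /eqP ll.
have N : l^* * l = 1.
  have := hn; rewrite L (ipZ_l hK) (ipZ_r hK) Phi_norm // mulrA.
  by move=> /eqP; rewrite -{2}(mul1r (ipH y y)) (inj_eq (mulIf nyy)) => /eqP.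
have ll' : l^* = - l by apply/eqP; rewrite -addr_eq0 addrC ll.
have l2 : (l - 'i) * (l + 'i) = 0.
  have -> : (l - 'i) * (l + 'i) = l ^+ 2 - 'i ^+ 2 by ring.
  rewrite sqrCi; move: N; rewrite ll' mulNr -expr2 => N.
  by rewrite -N opprK; ring.
move/eqP: l2; rewrite mulf_eq0 subr_eq0 addr_eq0 => /orP[/eqP li|/eqP li].
  by left; rewrite L li.
by right; rewrite L li.
Qed.


Lemma Phi_i2 y : ipH e y = 0 -> y != 0 ->
  exists l, l ^+ 2 = -1 /\ Phi ('i *: y) = l *: Phi y.
Proof.
move=> hy y0; case: (Phi_i hy y0) => L; [exists 'i | exists (- 'i)]; split=> //.
  exact: sqrCi.
by rewrite sqrrN sqrCi.
Qed.

Lemma twice_neq0 (l : R[i]) : l != 0 -> l + l != 0.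
Proof. by move=> l0; rewrite -mulr2n -mulr_natl mulf_neq0 // pnatr_eq0. Qed.

Lemma sq_neq0 (l : R[i]) : l ^+ 2 = -1 -> l != 0.
Proof. by move=> h; apply/eqP => l0; move: h; rewrite l0 expr0n /= => /eqP; rewrite eq_sym oppr_eq0 oner_eq0. Qed.

Lemma Phi_i_same y0 l : ipH e y0 = 0 -> y0 != 0 -> l ^+ 2 = -1 ->
  Phi ('i *: y0) = l *: Phi y0 -> forall y, ipH e y = 0 -> Phi ('i *: y) = l *: Phi y.
Proof.
move=> h0 n0 hl L0 y hy.
have [->|yn] := eqVneq y 0; first by rewrite !scaler0 Phi0 scaler0.
have [s0|s0] := eqVneq (y + y0) 0.
  move/eqP: s0; rewrite addr_eq0 => /eqP ->.
  by rewrite scalerN Phi_opp ?(E_scale _ h0) // L0 Phi_opp // scalerN.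
have hs := E_add hy h0.
have [ly [hly Ly]] := Phi_i2 hy yn.
have [ls [hls Ls]] := Phi_i2 hs s0.
have key : ls *: (Phi y + Phi y0) = ly *: Phi y + l *: Phi y0.
  by rewrite -Phi_add // -Ls scalerDr Phi_add ?E_scale // Ly L0.
have l0 := sq_neq0 hl.
have u0 : Phi y != 0 by rewrite Phi_eq0.
have v0 : Phi y0 != 0 by rewrite Phi_eq0.
have /orP[/eqP lyl0|/eqP lyl] : (ly == l) || (ly == - l) by rewrite -eqf_sqr hly hl.
  by rewrite -lyl0.
exfalso; have /orP[/eqP lsl|/eqP lsl] : (ls == l) || (ls == - l) by rewrite -eqf_sqr hls hl.
  move: key; rewrite lsl lyl scalerDr => /addIr key.
  have : (l + l) *: Phi y = 0 by rewrite scalerDl {1}key scaleNr addNr.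
  by move/eqP; rewrite scaler_eq0 (negPf (twice_neq0 l0)) (negPf u0).
move: key; rewrite lsl lyl scalerDr => /addrI key.
have : (l + l) *: Phi y0 = 0 by rewrite scalerDl -{1}key scaleNr addNr.
by move/eqP; rewrite scaler_eq0 (negPf (twice_neq0 l0)) (negPf v0).
Qed.

Lemma Phi_i_unif : exists b : bool, forall y, ipH e y = 0 -> Phi ('i *: y) = sg b 'i *: Phi y.
Proof.
case: (pselect (exists y0, ipH e y0 = 0 /\ y0 != 0)) => [[y0 [h0 n0]]|nE].
  have [l [hl L]] := Phi_i2 h0 n0.
  have /orP[/eqP li|/eqP li] : (l == 'i) || (l == - 'i) by rewrite -eqf_sqr hl sqrCi.
    by exists true => y hy; rewrite /= (Phi_i_same h0 n0 hl L hy) li.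
  by exists false => y hy; rewrite /= conjCi (Phi_i_same h0 n0 hl L hy) li.
exists true => y hy; have [->|y0] := eqVneq y 0; first by rewrite !scaler0 Phi0 scaler0.
by exfalso; apply: nE; exists y.
Qed.


Section WithB.
Variable b : bool.
Hypothesis Hb : forall y, ipH e y = 0 -> Phi ('i *: y) = sg b 'i *: Phi y.

Lemma Phi_scale c y : ipH e y = 0 -> Phi (c *: y) = sg b c *: Phi y.
Proof.
move=> hy.
have ra : ('Re c)^* = 'Re c by apply: conj_Creal; apply: Creal_Re.
have rd : ('Im c)^* = 'Im c by apply: conj_Creal; apply: Creal_Im.
have -> : c *: y = 'Re c *: y + 'Im c *: ('i *: y) by rewrite scalerA mulrC -scalerDl -Crect.
rewrite Phi_add ?E_scale // (Phi_rscale _ ra) // (Phi_rscale _ rd) ?E_scale // Hb // scalerA -scalerDl.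
by rewrite {3}(Crect c) sgD sgM (sg_real _ ra) (sg_real _ rd) (mulrC ('Im c)).
Qed.

Lemma two_neq0 : (2%:R : R[i]) != 0.
Proof. by rewrite pnatr_eq0. Qed.

Lemma Phi_ip y z : ipH e y = 0 -> ipH e z = 0 -> ipK (Phi y) (Phi z) = sg b (ipH y z).
Proof.
move=> hy hz.
have e1 := Phi_RE hy hz.
have e2 := Phi_RE hy (E_scale 'i hz).
rewrite Hb // (ipZ_r hK) (ipZ_l hK) (ipZ_r hH) (ipZ_l hH) in e2.
have i0 := neq0Ci R[i]; have t0 := two_neq0.
case: b e2 => /= e2.
  have -> : ipK (Phi y) (Phi z) = ((ipK (Phi y) (Phi z) + ipK (Phi z) (Phi y))
     + ('i * ipK (Phi y) (Phi z) + 'i^* * ipK (Phi z) (Phi y)) / 'i) / 2%:R.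
    by rewrite conjCi; field.
  by rewrite e1 e2 conjCi; field.
have -> : ipK (Phi y) (Phi z) = ((ipK (Phi y) (Phi z) + ipK (Phi z) (Phi y))
     - ('i^* * ipK (Phi y) (Phi z) + 'i^*^* * ipK (Phi z) (Phi y)) / 'i) / 2%:R.
  by rewrite cjK conjCi; field.
by rewrite e1 e2 conjCi (ipC hH z y); field.
Qed.

Definition U x := sg b (ipH e x) *: e' + Phi (x - ipH e x *: e).

Lemma E_perp x : ipH e (x - ipH e x *: e) = 0.
Proof. by rewrite (ipB_r hH) (ipZ_r hH) ee mulr1 subrr. Qed.

Lemma U_add x y : U (x + y) = U x + U y.
Proof.
rewrite /U (ipD_r hH) sgD scalerDl.
have -> : x + y - (ipH e x + ipH e y) *: e = (x - ipH e x *: e) + (y - ipH e y *: e).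
  by rewrite scalerDl opprD addrACA.
rewrite Phi_add ?E_perp //.
by rewrite addrACA.
Qed.

Lemma U_scale c x : U (c *: x) = sg b c *: U x.
Proof.
rewrite /U (ipZ_r hH) sgM -scalerA.
have -> : c *: x - (c * ipH e x) *: e = c *: (x - ipH e x *: e).
  by rewrite scalerBr scalerA.
by rewrite Phi_scale ?E_perp // scalerDr.
Qed.

Lemma U_ip x y : ipK (U x) (U y) = sg b (ipH x y).
Proof.
rewrite /U !(ipD_l hK) !(ipD_r hK) !(ipZ_l hK) !(ipZ_r hK) ee' Phi_e' ?E_perp //.
rewrite Phi_e'2 ?E_perp // Phi_ip ?E_perp //.
have -> : ipH (x - ipH e x *: e) (y - ipH e y *: e) = ipH x y - (ipH e x)^* * ipH e y.
  rewrite !(ipB_l hH) !(ipB_r hH) !(ipZ_l hH) !(ipZ_r hH) ee (ipC hH x e); ring.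
rewrite sgD sgN sgM sgJ; ring.
Qed.

Lemma gS z c : z != 0 -> exists mu, g (c *: z) = mu *: g z.
Proof.
move=> z0; exists (pc ipK (g z) (g (c *: z))); apply: (cs_eq hK); first by rewrite gnorm0.
rewrite G1 !G0 !(ipZ_l hH) !(ipZ_r hH); ring.
Qed.

Lemma U_g x : exists c, U x = c *: g x.
Proof.
have [hx|ax0] := eqVneq (ipH e x) 0.
  have [c hc] := Phi_g hx; exists c.
  by rewrite /U hx sg0 scale0r add0r scale0r subr0.
set a := ipH e x in ax0 *.
have x0 : x != 0 by apply/eqP => x0; move: ax0; rewrite /a x0 (ip0_r hH) eqxx.
set y := a^-1 *: (x - a *: e).
have hy : ipH e y = 0 by rewrite /y E_scale // E_perp.
have xy : x - a *: e = a *: y by rewrite /y scalerA mulfV // scale1r.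
have ey : e + y = a^-1 *: x.
  by rewrite /y scalerBr scalerA mulVf // scale1r addrC subrK.
have [mu hmu] := gS (a^-1) x0.
exists (sg b a * (al y)^-1 * mu).
rewrite /U -/a xy Phi_scale // -scalerDr ey_inv // ey hmu !scalerA.
by [].
Qed.

End WithB.

Theorem wigner_core : exists (b : bool) (V : H -> K),
  [/\ forall x y, V (x + y) = V x + V y,
      forall c x, V (c *: x) = sg b c *: V x,
      forall x y, ipK (V x) (V y) = sg b (ipH x y) &
      forall x, exists c, V x = c *: g x].
Proof.
have [b Hb] := Phi_i_unif.
exists b, (U b); split.
- exact: U_add.
- exact: U_scale Hb.
- exact: U_ip Hb.
- exact: U_g Hb.
Qed.

End Core.




Lemma rcM (R : realType) (a b : R) : (a * b)%:C = a%:C * b%:C.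
Proof. exact: rmorphM. Qed.
Lemma rc_conj (R : realType) (a : R) : (a%:C)^* = a%:C.
Proof. by apply: conj_Creal; apply/complex_realP; exists a. Qed.

Lemma PH_eq (R : realType) (H : lmodType R[i]) (x y : PH H) : proj1_sig x = proj1_sig y -> x = y.
Proof. by case: x => x px; case: y => y py /= e; apply: eq_exist. Qed.

Lemma PH_nonzero (R : realType) (H : lmodType R[i]) (x : PH H) : proj1_sig x <> span1 0.
Proof.
case: x => x [psi [p0 hx]] /= e; apply: p0; have := span1_id psi; rewrite -hx e span1_0; exact.
Qed.

Lemma scale_real_norm (R : realType) (H : lmodType R[i]) (ip : H -> H -> R[i]) (hH : is_hilbert ip)
  (u : H) (q : R) : 0 <= q ->
  ip ((Num.sqrt q)%:C *: u) ((Num.sqrt q)%:C *: u) = q%:C * ip u u.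
Proof.
move=> q0; rewrite (ipZ_l hH) (ipZ_r hH) rc_conj mulrA -rcM -expr2 sqr_sqrtr //.
Qed.

Section Main.
Variables (R : realType) (H K : lmodType R[i]) (ipH : H -> H -> R[i]) (ipK : K -> K -> R[i]).
Hypotheses (hH : is_hilbert ipH) (hK : is_hilbert ipK).
Variables (fs : PH H -> PH K) (fu : LH ipK -> LH ipH).
Hypothesis hchu : chu_morphism (@ebar R H ipH) (@ebar R K ipK) fs fu.
Hypothesis hinj : injective fs.

Definition gP (psi : H) (k : K) := ipK k k = ipH psi psi /\
  forall x : PH H, proj1_sig x = span1 psi -> proj1_sig (fs x) = span1 k.

Definition g (psi : H) : K := xget 0 (gP psi).

Lemma Re_pos (L : lmodType R[i]) (ip : L -> L -> R[i]) (hL : is_hilbert ip) (x : L) :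
  x != 0 -> 0 < complex.Re (ip x x).
Proof.
move=> x0; rewrite lt_def Re_ipxx_ge0 // andbT; apply/eqP => r0.
by move: (ipxx_neq0 hL x0); rewrite -(ipxx_Re hL) r0 eqxx.
Qed.

Lemma g_spec psi : gP psi (g psi).
Proof.
apply: xgetPex.
have [->|p0] := eqVneq psi 0.
  exists 0; split; first by rewrite (ip0_r hK) (ip0_r hH).
  by move=> x hx; exfalso; exact: (PH_nonzero hx).
case: (proj2_sig (fs (mkray p0))) => k0 [k00 hk0].
have k0n : k0 != 0 by apply/eqP.
set q := complex.Re (ipH psi psi) / complex.Re (ipK k0 k0).
have qpos : 0 < q by rewrite divr_gt0 // Re_pos.
exists ((Num.sqrt q)%:C *: k0); split.
  rewrite (scale_real_norm hK) ?ltW // /q rcdiv !ipxx_Re //.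
  by rewrite mulfVK // ipxx_neq0.
move=> x hx; have -> : x = mkray p0 by apply: PH_eq.
rewrite hk0 span1_scale //.
apply/eqP => h; have := congr1 (@complex.Re R) h; rewrite /= => /eqP.
by rewrite sqrtr_eq0 leNgt qpos.
Qed.

Lemma G0 psi : ipK (g psi) (g psi) = ipH psi psi.
Proof. by case: (g_spec psi). Qed.

Lemma g_neq0 psi : psi != 0 -> g psi != 0.
Proof. by move=> p0; rewrite -(ipxx_eq0 hK) G0 (ipxx_eq0 hH). Qed.

Lemma gray (x : PH H) psi : proj1_sig x = span1 psi -> proj1_sig (fs x) = span1 (g psi).
Proof. by case: (g_spec psi) => _; apply. Qed.

Lemma chu_C (x : PH H) (S : LH ipK) : (@ebar R H ipH x (fu S))%:C = (@ebar R K ipK (fs x) S)%:C.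
Proof. by rewrite hchu. Qed.

Lemma rhs_tp (x : PH H) psi (k : K) : proj1_sig x = span1 psi -> psi != 0 ->
  (@ebar R K ipK (fs x) (mkL hK k))%:C = tp ipK k (g psi).
Proof. by move=> hx p0; apply: (ebar_span1 hK) => //; [exact: gray | exact: g_neq0]. Qed.

Lemma lhs_in (x : PH H) (S : LH ipH) psi : proj1_sig x = span1 psi -> psi != 0 ->
  proj1_sig S psi -> (@ebar R H ipH x S)%:C = 1.
Proof.
move=> hx p0 Sp; rewrite (ebarE hH) hx.
have [c [c0 ->]] := ray_rep_span p0.
rewrite proj_in //; last by apply: (scale_in _ (proj2_sig S)).
  by rewrite divff // ipxx_neq0 // scaler_eq0 negb_or c0.
exact: (proj2_sig S).
Qed.

Lemma T_span1 phi (p0 : phi != 0) : proj1_sig (fu (mkL hK (g phi))) = span1 phi.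
Proof.
set S' := mkL hK (g phi).
set T := proj1_sig (fu S').
have cT : closed_subspace ipH T := proj2_sig (fu S').
have gp0 := g_neq0 p0.
have Tphi : T phi.
  have := chu_C (mkray p0) S'; rewrite (rhs_tp (x:=mkray p0) (g phi) erefl p0) (ebarE hH) /=.
  have [c [c0 hr]] := ray_rep_span p0; rewrite hr.
  set r := c *: phi.
  have r0 : r != 0 by rewrite scaler_eq0 negb_or c0.
  have rr := ipxx_neq0 hH r0.
  have tp1 : tp ipK (g phi) (g phi) = 1.
    by rewrite /tp divff // mulf_neq0 // ipxx_neq0.
  rewrite tp1.
  case: (proj_cases ipH T r) => [hp|->]; last by rewrite (ip0_r hH) mul0r => /eqP; rewrite eq_sym oner_eq0.
  move=> h1; have h2 : ipH (proj ipH T r) (proj ipH T r) = ipH r r.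
    by rewrite -[ipH (proj ipH T r) _](mulfVK rr) h1 mul1r.
  have := is_proj_pyth hH hp; rewrite h2 -{1}[ipH r r]addr0 => /addrI /esym /eqP.
  rewrite (ipxx_eq0 hH) subr_eq0 => /eqP hpr.
  have Tr : T r by rewrite hpr; case: hp.
  have := scale_in c^-1 cT Tr; rewrite /r scalerA mulVf // scale1r; exact.
apply/seteqP; split=> x.
  move=> Tx; set x' := x - pc ipH phi x *: phi.
  have Tx' : T x' by apply: (sub_in cT) => //; apply: (scale_in _ cT).
  have [hpx _] := proj_pyth hH phi x; rewrite -/x' in hpx.
  have [x0|x0] := eqVneq x' 0.
    apply/(span1P _ _); exists (pc ipH phi x); apply/eqP.
    by rewrite -subr_eq0 -/x' x0.
  exfalso.
  have := chu_C (mkray x0) S'; rewrite (rhs_tp (x:=mkray x0) (g phi) erefl x0) (lhs_in (x:=mkray x0) (S:=fu S') erefl x0 Tx') => h.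
  have gx0 := g_neq0 x0.
  have hcs : ipK (g phi) (g x') * ipK (g x') (g phi) = ipK (g phi) (g phi) * ipK (g x') (g x').
    have nz : ipK (g phi) (g phi) * ipK (g x') (g x') != 0 by rewrite mulf_neq0 // ipxx_neq0.
    by rewrite -[LHS](mulfVK nz) -/(tp ipK (g phi) (g x')) -h mul1r.
  have e1 := cs_eq hK gp0 hcs.
  set mu := pc ipK (g phi) (g x') in e1.
  have mu0 : mu != 0 by apply/eqP => m0; move: gx0; rewrite e1 m0 scale0r eqxx.
  have : mkray x0 = mkray p0.
    apply: hinj; apply: PH_eq; rewrite (gray (x:=mkray x0) erefl) (gray (x:=mkray p0) erefl).
    by rewrite e1 span1_scale.
  move=> /(congr1 (@proj1_sig _ _)) /= /esym/(span1_eq p0) [c [c0 hc]].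
  move: hpx; rewrite hc (ipZ_r hH) => /eqP; rewrite mulf_eq0 (negPf c0) /=.
  by rewrite (ipxx_eq0 hH) (negPf p0).
by move=> /span1P [l ->]; apply: (scale_in _ cT).
Qed.

Lemma tp_pres phi psi : phi != 0 -> psi != 0 -> tp ipK (g phi) (g psi) = tp ipH phi psi.
Proof.
move=> p0 s0; have := chu_C (mkray s0) (mkL hK (g phi)).
rewrite (rhs_tp (x:=mkray s0) (g phi) erefl s0) => <-.
by apply: (ebar_span1 hH) => //; apply: T_span1.
Qed.

Lemma G1 x y : ipK (g x) (g y) * ipK (g y) (g x) = ipH x y * ipH y x.
Proof.
have [->|x0] := eqVneq x 0.
  have -> : g 0 = 0 by apply/eqP; rewrite -(ipxx_eq0 hK) G0 (ip0_r hH).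
  by rewrite (ip0_l hK) (ip0_l hH) !mul0r.
have [->|y0] := eqVneq y 0.
  have -> : g 0 = 0 by apply/eqP; rewrite -(ipxx_eq0 hK) G0 (ip0_r hH).
  by rewrite (ip0_r hK) (ip0_r hH) !mul0r.
have := tp_pres x0 y0; rewrite /tp !G0 => /eqP.
rewrite (inj_eq (mulIf _)) ?invr_eq0 ?mulf_neq0 ?ipxx_neq0 // => /eqP //.
Qed.


Section VProps.
Variables (b : bool) (V : H -> K).
Hypotheses (Vadd : forall x y, V (x + y) = V x + V y)
  (Vsc : forall c x, V (c *: x) = sg b c *: V x)
  (Vip : forall x y, ipK (V x) (V y) = sg b (ipH x y))
  (Vg : forall x, exists c, V x = c *: g x).

Lemma V0 : V 0 = 0.
Proof. by have := Vsc 0 0; rewrite scale0r sg0 scale0r. Qed.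

Lemma VN x : V (- x) = - V x.
Proof. by rewrite -scaleN1r Vsc sgN sg_real ?cj1 // scaleN1r. Qed.

Lemma VB x y : V (x - y) = V x - V y.
Proof. by rewrite Vadd VN. Qed.

Lemma V_eq0 x : (V x == 0) = (x == 0).
Proof. by rewrite -(ipxx_eq0 hK) Vip sg_eq0 (ipxx_eq0 hH). Qed.

Lemma V_inj : injective V.
Proof.
move=> x y e; apply/eqP; rewrite -subr_eq0 -V_eq0 VB e subrr //.
Qed.

Lemma Vg_nz x : x != 0 -> exists c, c != 0 /\ V x = c *: g x.
Proof.
move=> x0; have [c hc] := Vg x; exists c; split=> //.
by apply/eqP => c0; move: x0; rewrite -V_eq0 hc c0 scale0r eqxx.
Qed.

Lemma V_induces : induces ipH ipK fs V.
Proof.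
move=> x psi p0 hx; have p0' : psi != 0 by apply/eqP.
have [c [c0 ->]] := Vg_nz p0'.
by rewrite span1_scale // (gray hx).
Qed.

Lemma V_surj (e : H) : ipH e e = 1 -> forall k, exists x, V x = k.
Proof.
move=> ee k; case: (pselect (exists x, V x = k)) => // nk; exfalso.
have [k1 [nk1 [x0 hx0]]] : exists k1, ~ (exists x, V x = k1) /\ exists x0, ipK (V x0) k1 != 0.
  case: (pselect (exists x0, ipK (V x0) k != 0)) => [h|h]; first by exists k.
  exists (k + V e); split.
    by case=> x hx; apply: nk; exists (x - e); rewrite VB hx addrK.
  exists e; rewrite (ipD_r hK) Vip ee sg_real ?cj1 //.
  have -> : ipK (V e) k = 0 by case: (eqVneq (ipK (V e) k) 0) => // hn; exfalso; apply: h; exists e.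
  by rewrite add0r oner_eq0.
have k10 : k1 != 0 by apply/eqP => k0; apply: nk1; exists 0; rewrite V0 k0.
have xn0 : x0 != 0 by apply/eqP => e0; move: hx0; rewrite e0 V0 (ip0_l hK) eqxx.
set S' := mkL hK k1.
set T := proj1_sig (fu S').
have cT : closed_subspace ipH T := proj2_sig (fu S').
have [c [c0 hc]] := Vg_nz xn0.
have gk : ipK (g x0) k1 != 0.
  by apply: contraNneq hx0; rewrite hc (ipZ_l hK) => ->; rewrite mulr0.
have := chu_C (mkray xn0) S'; rewrite (rhs_tp (x:=mkray xn0) k1 erefl xn0) (ebarE hH) /=.
have [d [d0 ->]] := ray_rep_span xn0.
set r := d *: x0.
have tpnz : tp ipK k1 (g x0) != 0.
  rewrite /tp mulf_neq0 // ?invr_eq0 ?mulf_neq0 ?ipxx_neq0 ?g_neq0 //.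
  by rewrite (ipC hK) conjC_eq0.
case: (proj_cases ipH T r) => [hp|->]; last first.
  by rewrite (ip0_r hH) mul0r => /esym/eqP; rewrite (negPf tpnz).
set p := proj ipH T r => hpp.
have p0 : p != 0.
  apply/eqP => e0; move: hpp; rewrite e0 (ip0_r hH) mul0r => /esym/eqP.
  by rewrite (negPf tpnz).
have Tp : T p by case: hp.
have := chu_C (mkray p0) S'.
rewrite (rhs_tp (x:=mkray p0) k1 erefl p0) (lhs_in (x:=mkray p0) (S:=fu S') erefl p0 Tp) => h1.
have gp0 := g_neq0 p0.
have hcs : ipK (g p) k1 * ipK k1 (g p) = ipK (g p) (g p) * ipK k1 k1.
  have nz : ipK k1 k1 * ipK (g p) (g p) != 0 by rewrite mulf_neq0 // ipxx_neq0.
  rewrite mulrC [RHS]mulrC.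
  by rewrite -[LHS](mulfVK nz) -/(tp ipK k1 (g p)) -h1 mul1r.
have ek := cs_eq hK gp0 hcs.
have [c' [c'0 hc']] := Vg_nz p0.
apply: nk1; exists (sg b (pc ipK (g p) k1 / c') *: p).
rewrite Vsc sgK hc' scalerA mulfVK //.
Qed.

Lemma V_bij (e : H) : ipH e e = 1 -> bijective V.
Proof.
move=> ee; have sur := V_surj ee.
exists (fun k => xget 0 (fun x => V x = k)).
  by move=> x; apply: V_inj; apply: (@xgetPex _ 0 (fun y => V y = V x)); exists x.
by move=> k; apply: (@xgetPex _ 0 (fun y => V y = k)); apply: sur.
Qed.

End VProps.


Lemma dim_nonzero (L : lmodType R[i]) : dim_gt2 L -> exists x1 x2 : L,
  [/\ x1 != 0, x2 != 0 & forall a1 a2, a1 *: x1 + a2 *: x2 = 0 -> a1 = 0 /\ a2 = 0].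
Proof.
case=> x1 [x2 [x3 h]]; exists x1, x2.
have ind a1 a2 : a1 *: x1 + a2 *: x2 = 0 -> a1 = 0 /\ a2 = 0.
  by move=> e; have := h a1 a2 0; rewrite scale0r addr0 => /(_ e) [].
split=> //.
  by apply/eqP => e; have := ind 1 0; rewrite e scaler0 scale0r addr0 => /(_ erefl) [/eqP]; rewrite oner_eq0.
by apply/eqP => e; have := ind 0 1; rewrite e scaler0 scale0r add0r => /(_ erefl) [_ /eqP]; rewrite oner_eq0.
Qed.

Lemma unit_e : dim_gt2 H -> exists e, ipH e e = 1.
Proof.
case/dim_nonzero => x1 [_ [x0 _ _]].
set q := (complex.Re (ipH x1 x1))^-1.
have qpos : 0 <= q by rewrite invr_ge0 Re_ipxx_ge0.
exists ((Num.sqrt q)%:C *: x1); rewrite (scale_real_norm hH) // /q.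
rewrite (_ : ((complex.Re (ipH x1 x1))^-1)%:C = ((complex.Re (ipH x1 x1))%:C)^-1); last exact: fmorphV.
by rewrite (ipxx_Re hH) mulVf // ipxx_neq0.
Qed.

Lemma exists_U : dim_gt2 H -> exists U, semiunitary ipH ipK U /\ induces ipH ipK fs U.
Proof.
move=> dH; have [e ee] := unit_e dH.
have [b [V [Vadd Vsc Vip Vg]]] := wigner_core hH hK G0 G1 ee.
exists V; split; last exact: V_induces Vip Vg.
have bij := V_bij Vadd Vsc Vip Vg ee.
by case: b Vsc Vip bij {Vg} => Vsc Vip bij; [left|right]; split.
Qed.

Lemma semi_sg U : semiunitary ipH ipK U -> exists b, [/\ bijective U,
  (forall x y, U (x + y) = U x + U y), (forall c x, U (c *: x) = sg b c *: U x) &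
  (forall x y, ipK (U x) (U y) = sg b (ipH x y))].
Proof. by case=> h; [exists true|exists false]; exact: h. Qed.

Definition indep (x z : H) := forall a c, a *: x + c *: z = 0 -> a = 0 /\ c = 0.

Lemma indep_of x y : x != 0 -> ~ (exists l, y = l *: x) -> indep x y.
Proof.
move=> x0 ny a c e.
have [c0|c0] := eqVneq c 0.
  split=> //; move: e; rewrite c0 scale0r addr0 => /eqP; rewrite scaler_eq0 (negPf x0) orbF.
  by move/eqP.
exfalso; apply: ny; exists (- a / c).
apply: (scalerI c0); rewrite scalerA mulrC mulfVK // scaleNr.
by apply/eqP; rewrite -addr_eq0 addrC e.
Qed.

Lemma uniqueness U V : dim_gt2 H ->
  semiunitary ipH ipK U -> induces ipH ipK fs U ->
  semiunitary ipH ipK V -> induces ipH ipK fs V ->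
  exists c : R[i], `|c| = 1 /\ forall psi : H, V psi = c *: U psi.
Proof.
move=> dH sU iU sV iV.
have [bU [_ Uadd Usc Uip]] := semi_sg sU.
have [bV [_ Vadd Vsc Vip]] := semi_sg sV.
set coef := fun x => xget 0 (fun c => V x = c *: U x).
have coefP x : x != 0 -> V x = coef x *: U x.
  move=> x0; apply: (@xgetPex _ 0 (fun c => V x = c *: U x)).
  have x0' : x <> 0 by apply/eqP.
  have hU := iU (mkray x0) x x0' erefl; have hV := iV (mkray x0) x x0' erefl.
  have := span1_id (V x); rewrite -hV hU => /span1P [c hc]; by exists c.
have same x z : indep x z -> coef x = coef z.
  move=> ixz.
  have x0 : x != 0 by apply/eqP => e0; have := ixz 1 0; rewrite e0 scaler0 scale0r addr0 => /(_ erefl) [/eqP]; rewrite oner_eq0.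
  have z0 : z != 0 by apply/eqP => e0; have := ixz 0 1; rewrite e0 scaler0 scale0r add0r => /(_ erefl) [_ /eqP]; rewrite oner_eq0.
  have s0 : x + z != 0 by apply/eqP => e0; have := ixz 1 1; rewrite !scale1r e0 => /(_ erefl) [/eqP]; rewrite oner_eq0.
  have e1 := coefP _ s0; rewrite Vadd Uadd (coefP _ x0) (coefP _ z0) scalerDr in e1.
  have : (coef (x + z) - coef x) *: U x + (coef (x + z) - coef z) *: U z = 0.
    by rewrite !scalerBl addrACA -opprD -e1 subrr.
  rewrite -(sgK bU (_ - coef x)) -(sgK bU (_ - coef z)) -!Usc -Uadd.
  rewrite -(V0 Usc) => /(V_inj Uadd Usc Uip) /ixz [/eqP h1 /eqP h2].
  move: h1 h2; rewrite !sg_eq0 !subr_eq0 => /eqP <- /eqP <- //.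
case/dim_nonzero: dH => w1 [w2 [w10 w20 i12]].
have i12' : indep w1 w2 by move=> a c; apply: i12.
set c := coef w1.
have allc y : V y = c *: U y.
  have [->|y0] := eqVneq y 0; first by rewrite (V0 Vsc) (V0 Usc) scaler0.
  rewrite (coefP _ y0); congr (_ *: _).
  case: (pselect (exists l, y = l *: w1)) => [[l1 h1]|n1]; last by rewrite -(same _ _ (indep_of w10 n1)).
  case: (pselect (exists l, y = l *: w2)) => [[l2 h2]|n2].
    exfalso; have := i12 l1 (- l2); rewrite scaleNr -h1 -h2 subrr => /(_ erefl) [l10 _].
    by move: y0; rewrite h1 l10 scale0r eqxx.
  by rewrite -(same _ _ (indep_of w20 n2)) /c (same _ _ i12').
exists c; split=> //.
have nw := ipxx_neq0 hH w10.
have : ipK (V w1) (V w1) = c^* * c * ipK (U w1) (U w1).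
  by rewrite allc (ipZ_l hK) (ipZ_r hK) mulrA.
rewrite Vip Uip !sg_real ?(ipxx_conj hH) // => /eqP.
rewrite -{1}(mul1r (ipH w1 w1)) (inj_eq (mulIf nw)) -normCKC eq_sym sqrp_eq1 //.
by move/eqP.
Qed.

End Main.

Theorem theorem3p12 (R : realType)
  (H : lmodType R[i]) (ipH : H -> H -> R[i])
  (K : lmodType R[i]) (ipK : K -> K -> R[i])
  (hH : is_hilbert ipH) (hK : is_hilbert ipK)
  (dH : dim_gt2 H) (dK : dim_gt2 K)
  (fs : PH H -> PH K) (fu : LH ipK -> LH ipH)
  (hchu : chu_morphism (@ebar R H ipH) (@ebar R K ipK) fs fu)
  (hinj : injective fs) :
  (exists U : H -> K, semiunitary ipH ipK U /\ induces ipH ipK fs U) /\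
  (forall U V : H -> K,
     semiunitary ipH ipK U -> induces ipH ipK fs U ->
     semiunitary ipH ipK V -> induces ipH ipK fs V ->
     exists c : R[i], `|c| = 1 /\ forall psi : H, V psi = c *: U psi).
Proof.
split; first exact: exists_U.
by move=> U V; apply: uniqueness.
Qed.
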